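(* Let $W$ be an entanglement witness on $\mathbb{C}^m\otimes\mathbb{C}^n$ and set $W_t:=tW+(1-t)W^*$ for $t\in[0,1]$. (i) For every $t\in[0,1]$, $W_t$ is an entanglement witness if and only if $W_t$ is not positive semidefinite. (ii) For a given $t\in[0,1]$, $W_t$ is an entanglement witness if and only if there is a state $\rho$ such that $W$ detects $\rho_t:=t\rho+(1-t)\rho^*$, i.e. $\mathrm{tr}(W\rho_t)<0$.
   Context: An entanglement witness on $\mathbb{C}^m\otimes\mathbb{C}^n$ is a Hermitian matrix $W$ with $\mathrm{tr}(W\sigma)\ge0$ for all separable states $\sigma$ and $\mathrm{tr}(W\sigma)<0$ for at least one entangled state; $W$ detects $\rho$ if $\mathrm{tr}(W\rho)<0$. $M^*$ denotes the entrywise complex conjugate. *)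

(* Defs.v *)
From HB Require Import structures.
From mathcomp Require Import all_boot all_order all_algebra.
From mathcomp Require Import complex mxtens.
From mathcomp Require Import reals.
Set Implicit Arguments. Unset Strict Implicit. Unset Printing Implicit Defensive.
Import Order.TTheory GRing.Theory Num.Theory.
Local Open Scope ring_scope.
Local Open Scope complex_scope.

Section QI.
Variable R : realType.
Local Notation C := R[i].

Definition mconj {p q : nat} (A : 'M[C]_(p, q)) : 'M[C]_(p, q) := map_mx (@conjc R) A.

Definition adj {p q : nat} (A : 'M[C]_(p, q)) : 'M[C]_(q, p) := (mconj A)^T.

Definition hermitian {p : nat} (A : 'M[C]_p) : Prop := adj A = A.

(* positive semidefinite: Hermitian with nonnegative quadratic form
   (0 <= z in the numClosedField C means z is real and nonnegative) *)
Definition psd {p : nat} (A : 'M[C]_p) : Prop :=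
  hermitian A /\ forall v : 'cV[C]_p, 0 <= (adj v *m A *m v) 0 0.

Definition is_state {p : nat} (rho : 'M[C]_p) : Prop := psd rho /\ \tr rho = 1.

Definition separable {m n : nat} (sigma : 'M[C]_(m * n)) : Prop :=
  exists (k : nat) (pr : 'I_k -> R) (A : 'I_k -> 'M[C]_m) (B : 'I_k -> 'M[C]_n),
    [/\ (forall j, 0 <= pr j), \sum_(j < k) pr j = 1,
        (forall j, is_state (A j) /\ is_state (B j)) &
        sigma = \sum_(j < k) (pr j)%:C *: (A j *t B j)].

Definition detects {p : nat} (W rho : 'M[C]_p) : Prop := \tr (W *m rho) < 0.

Definition entanglement_witness {m n : nat} (W : 'M[C]_(m * n)) : Prop :=
  [/\ hermitian W,
      (forall sigma : 'M[C]_(m * n), separable sigma -> 0 <= \tr (W *m sigma)) &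
      exists rho : 'M[C]_(m * n), [/\ is_state rho, ~ separable rho & detects W rho]].

Definition cmix {p : nat} (t : R) (M : 'M[C]_p) : 'M[C]_p :=
  t%:C *: M + (1 - t)%:C *: mconj M.

End QI.

(* Main.v *)
Require Import Defs.
From HB Require Import structures.
From mathcomp Require Import all_boot all_order all_algebra.
From mathcomp Require Import complex mxtens.
From mathcomp Require Import reals.
From mathcomp Require spectral sesquilinear.
From Stdlib Require Import Classical.
Require Import Defs.
Import Order.TTheory GRing.Theory Num.Theory.
Set Implicit Arguments. Unset Strict Implicit. Unset Printing Implicit Defensive.
Local Open Scope ring_scope.

Section H.
Variable R : realType.
Local Notation C := R[i].

Lemma mconjK p q (A : 'M[C]_(p, q)) : mconj (mconj A) = A.
Proof. by apply/matrixP => i j; rewrite !mxE conjcK. Qed.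

Lemma mconjM p q r (A : 'M[C]_(p, q)) (B : 'M[C]_(q, r)) :
  mconj (A *m B) = mconj A *m mconj B.
Proof. exact: map_mxM. Qed.

Lemma mconjD p q (A B : 'M[C]_(p, q)) : mconj (A + B) = mconj A + mconj B.
Proof. by apply/matrixP => i j; rewrite !mxE rmorphD. Qed.

Lemma mconj0 p q : mconj (0 : 'M[C]_(p, q)) = 0.
Proof. by apply/matrixP => i j; rewrite !mxE rmorph0. Qed.

Lemma mconjZ p q a (A : 'M[C]_(p, q)) : mconj (a *: A) = (conjc a) *: mconj A.
Proof. by apply/matrixP => i j; rewrite !mxE rmorphM. Qed.

Lemma mconjT p q (A : 'M[C]_(p, q)) : mconj A^T = (mconj A)^T.
Proof. by apply/matrixP => i j; rewrite !mxE. Qed.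

Lemma tr_mconj p (A : 'M[C]_p) : \tr (mconj A) = conjc (\tr A).
Proof. rewrite /mxtrace rmorph_sum; apply: eq_bigr => i _; by rewrite mxE. Qed.

Lemma adjD p q (A B : 'M[C]_(p, q)) : adj (A + B) = adj A + adj B.
Proof. by rewrite /adj mconjD; apply/matrixP => i j; rewrite !mxE. Qed.

Lemma adjZ p q a (A : 'M[C]_(p, q)) : adj (a *: A) = conjc a *: adj A.
Proof. by rewrite /adj mconjZ; apply/matrixP => i j; rewrite !mxE. Qed.

Lemma adjM p q r (A : 'M[C]_(p, q)) (B : 'M[C]_(q, r)) :
  adj (A *m B) = adj B *m adj A.
Proof. by rewrite /adj mconjM trmx_mul. Qed.

Lemma adjK p q (A : 'M[C]_(p, q)) : adj (adj A) = A.
Proof. by rewrite /adj mconjT mconjK trmxK. Qed.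

Lemma herm_mconjT p (A : 'M[C]_p) : hermitian A -> mconj A = A^T.
Proof. by move=> h; rewrite -[mconj A]trmxK; congr trmx; exact: h. Qed.

Lemma herm_mconj p (A : 'M[C]_p) : hermitian A -> hermitian (mconj A).
Proof. by move=> h; rewrite /hermitian /adj mconjK (herm_mconjT h). Qed.

Lemma tr_herm_real p (A B : 'M[C]_p) : hermitian A -> hermitian B ->
  conjc (\tr (A *m B)) = \tr (A *m B).
Proof.
move=> hA hB; rewrite -tr_mconj mconjM (herm_mconjT hA) (herm_mconjT hB).
by rewrite -trmx_mul mxtrace_tr mxtrace_mulC.
Qed.

Lemma tr_mconjW p (W rho : 'M[C]_p) : hermitian W -> hermitian rho ->
  \tr (mconj W *m rho) = \tr (W *m mconj rho).
Proof.
move=> hW hr; have := tr_herm_real hW (herm_mconj hr).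
by rewrite -tr_mconj mconjM mconjK => ->.
Qed.

Lemma cmix_tr p t (W rho : 'M[C]_p) : hermitian W -> hermitian rho ->
  \tr (cmix t W *m rho) = \tr (W *m cmix t rho).
Proof.
move=> hW hr; rewrite /cmix mulmxDl mulmxDr -!scalemxAl -!scalemxAr.
by rewrite !mxtraceD !mxtraceZ tr_mconjW.
Qed.

Lemma herm_cmix p t (W : 'M[C]_p) : hermitian W -> hermitian (cmix t W).
Proof.
move=> hW; rewrite /hermitian /cmix adjD !adjZ !conjc_real hW.
by rewrite (herm_mconj hW).
Qed.

Lemma mconj_tens p q r s (A : 'M[C]_(p, q)) (B : 'M[C]_(r, s)) :
  mconj (A *t B) = mconj A *t mconj B.
Proof. by apply/matrixP => i j; rewrite !mxE rmorphM. Qed.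

Lemma state_mconj p (A : 'M[C]_p) : is_state A -> is_state (mconj A).
Proof.
move=> [[hA qA] tA]; split; [split|].
- exact: herm_mconj.
- move=> v; have H := qA (mconj v).
  have -> : adj v *m mconj A *m v = mconj (adj (mconj v) *m A *m mconj v).
    by rewrite !mconjM mconjK /adj mconjT mconjK.
  by rewrite [X in 0 <= X]mxE conjC_ge0.
- by rewrite tr_mconj tA rmorph1.
Qed.

Lemma sep_mconj m n (s : 'M[C]_(m * n)) : separable s -> separable (mconj s).
Proof.
move=> [k [pr [A [B [h0 h1 h2 ->]]]]].
exists k, pr, (fun j => mconj (A j)), (fun j => mconj (B j)); split => //.
  by move=> j; have [? ?] := h2 j; split; apply: state_mconj.
rewrite (big_morph _ (@mconjD _ _) (@mconj0 _ _)); apply: eq_bigr => j _.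
by rewrite mconjZ conjc_real mconj_tens.
Qed.


Lemma entry_quad k p (Q : 'M[C]_(k, p)) (X : 'M[C]_p) i :
  (Q *m X *m adj Q) i i = (row i Q *m X *m adj (row i Q)) 0 0.
Proof.
rewrite !mxE; apply: eq_bigr => j _; congr (_ * _); last by rewrite !mxE.
by rewrite !mxE; apply: eq_bigr => l _; rewrite !mxE.
Qed.

Lemma qpos k p (X : 'M[C]_p) (Q : 'M[C]_(k, p)) i :
  (forall v : 'cV[C]_p, 0 <= (adj v *m X *m v) 0 0) -> 0 <= (Q *m X *m adj Q) i i.
Proof. by move=> qX; rewrite entry_quad -{1}[row i Q]adjK; apply: qX. Qed.

Lemma tstar p (M : 'M[C]_p) : map_mx Num.conj M^T = adj M.
Proof. by apply/matrixP => i j; rewrite !mxE. Qed.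

Lemma psd_tr p (A B : 'M[C]_p) : psd A -> psd B -> 0 <= \tr (A *m B).
Proof.
move=> [hA qA] [hB qB].
have Bn : B \is spectral.normalmx.
  apply/spectral.normalmxP. rewrite tstar hB. by [].
have /spectral.orthomx_spectralP eB := Bn.
set P := spectral.spectralmx B in eB; set d := spectral.spectral_diag B in eB.
have Pu := spectral.spectral_unitarymx B.
rewrite spectral.invmx_unitary // tstar in eB.
have PP : P *m adj P = 1%:M by rewrite -tstar; apply/spectral.unitarymxP.
have Hd : diag_mx d = P *m B *m adj P.
  by rewrite eB !mulmxA PP mul1mx -mulmxA PP mulmx1.
have dpos i : 0 <= d 0 i.
  by have := qpos P i qB; rewrite -Hd mxE eqxx mulr1n.
rewrite eB !mulmxA mxtrace_mulC !mulmxA.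
rewrite mul_mx_diag /mxtrace; apply: sumr_ge0 => i _; rewrite mxE.
by apply: mulr_ge0; [exact: qpos|exact: dpos].
Qed.

Lemma neg_quad_state p (X : 'M[C]_p) (v : 'cV[C]_p) :
  (adj v *m X *m v) 0 0 < 0 -> exists rho, is_state rho /\ \tr (X *m rho) < 0.
Proof.
move=> hq.
set c := (adj v *m v) 0 0.
have nn k : 0 <= adj v 0 k * v k 0 by rewrite !mxE mulrC; exact: mulcJ_ge0.
have c_ge0 : 0 <= c by rewrite /c mxE; apply: sumr_ge0 => k _; exact: nn.
have c_neq0 : c != 0.
  apply/eqP => c0.
  have c0' : \sum_k adj v 0 k * v k 0 = 0 by move: c0; rewrite /c mxE.
  have H k : adj v 0 k * v k 0 = 0 by apply: (psumr_eq0P (fun k _ => nn k) c0').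
  have v0 : v = 0.
    apply/matrixP => k j; rewrite ord1 mxE; move: (H k); rewrite !mxE.
    by move/eqP; rewrite mulf_eq0 conjc_eq0 orbb => /eqP.
  by move: hq; rewrite v0 mulmx0 mxE ltxx.
have c_gt0 : 0 < c by rewrite lt_def c_neq0 c_ge0.
have cc : conjc c = c by apply/CrealP; exact: ger0_real.
exists (c^-1 *: (v *m adj v)); split; [split; [split|] |].
- by rewrite /hermitian adjZ adjM adjK fmorphV; congr (_^-1 *: _); exact: cc.
- move=> u; rewrite -scalemxAr -scalemxAl mxE.
  have -> : adj u *m (v *m adj v) *m u = (adj u *m v) *m (adj v *m u) by rewrite !mulmxA.
  rewrite [X in _ * X]mxE big_ord1.
  have -> : adj v *m u = adj (adj u *m v) by rewrite adjM adjK.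
  rewrite [adj _ 0 0]mxE [X in _ * (_ * X)]mxE.
  by apply: mulr_ge0; [rewrite invr_ge0 | exact: mulcJ_ge0].
- by rewrite mxtraceZ mxtrace_mulC /mxtrace big_ord1 mulVf.
- rewrite -scalemxAr mxtraceZ mulmxA mxtrace_mulC mulmxA /mxtrace big_ord1.
  by rewrite pmulr_rlt0 // invr_gt0.
Qed.

Lemma ew_of m n (X rho : 'M[C]_(m * n)) : hermitian X ->
  (forall s, separable s -> 0 <= \tr (X *m s)) -> is_state rho ->
  \tr (X *m rho) < 0 -> entanglement_witness X.
Proof.
move=> hX H sr hr; split => //; exists rho; split => //.
by move=> /H h0; have := le_lt_trans h0 hr; rewrite ltxx.
Qed.

Lemma nonneg_t m n (W : 'M[C]_(m * n)) t : 0 <= t -> t <= 1 ->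
  (forall s, separable s -> 0 <= \tr (W *m s)) ->
  forall s, separable s -> 0 <= \tr (cmix t W *m s).
Proof.
move=> t0 t1 H s hs.
rewrite /cmix mulmxDl -!scalemxAl mxtraceD !mxtraceZ.
have -> : \tr (mconj W *m s) = conjc (\tr (W *m mconj s))
  by rewrite -tr_mconj mconjM mconjK.
apply: addr_ge0; apply: mulr_ge0.
- by rewrite ler0c.
- exact: H.
- by rewrite ler0c subr_ge0.
- by rewrite conjC_ge0; apply: H; apply: sep_mconj.
Qed.

End H.

Theorem lemma4 (R : realType) (m n : nat) (W : 'M[R[i]]_(m * n)) :
  entanglement_witness W ->
  (forall t : R, 0 <= t <= 1 ->
     (entanglement_witness (cmix t W) <-> ~ psd (cmix t W))) /\
  (forall t : R, 0 <= t <= 1 ->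
     (entanglement_witness (cmix t W) <->
      exists rho : 'M[R[i]]_(m * n), is_state rho /\ detects W (cmix t rho))).
Proof.
move=> [hW hsep _].
split => t /andP[t0 t1]; have hWt := herm_cmix t hW;
  have nn := nonneg_t t0 t1 hsep.
- split.
  + move=> [_ _ [rho [sr _ dr]]] hp.
    have := psd_tr hp sr.1.
    by move=> h0; have := le_lt_trans h0 dr; rewrite ltxx.
  + move=> npsd.
    have : ~ (forall v : 'cV[R[i]]_(m * n), 0 <= (adj v *m cmix t W *m v) 0 0)
      by move=> h; apply: npsd; split.
    move=> /not_all_ex_not [v hv].
    have rq : (adj v *m cmix t W *m v) 0 0 \is Num.real.
      apply/CrealP.
      have e : adj (adj v *m cmix t W *m v) = adj v *m cmix t W *m v
        by rewrite !adjM adjK hWt mulmxA.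
      by rewrite -[in RHS]e /adj !mxE.
    have hq : (adj v *m cmix t W *m v) 0 0 < 0.
      by rewrite real_ltNge ?real0 //; apply/negP.
    have [rho [sr dr]] := neg_quad_state hq.
    exact: ew_of hWt nn sr dr.
- split.
  + move=> [_ _ [rho [sr _ dr]]]; exists rho; split => //.
    by rewrite /detects -cmix_tr //; exact: sr.1.1.
  + move=> [rho [sr dr]]; apply: (ew_of hWt nn sr).
    by rewrite cmix_tr //; exact: sr.1.1.
Qed.
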